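(* Let $\mathfrak{R}$ be either $\mathbb{F}_q$ ($q$ a prime power) or $\mathbb{Z}_k$ ($k\ge 2$), with character $\chi$ as in the context. Let $C$ and $D$ be two $\mathfrak{R}$-linear codes of length $n$ and $\bm{w}\in\mathfrak{R}^n$. Then (i) $\displaystyle \mathfrak{Jac}(C^{\perp},D,\bm{w}; x_{a} : a \in \mathfrak{R}^{3})=\frac{1}{|C|}\,\mathfrak{Jac}\Big(C,D,\bm{w};\ \sum_{b\in\mathfrak{R}}\chi(a_1 b)\,x_{(b,a_2,a_3)} : a\in\mathfrak{R}^3\Big)$; (ii) $\displaystyle \mathfrak{Jac}(C^{\perp},D^{\perp},\bm{w}; x_{a} : a \in \mathfrak{R}^{3})=\frac{1}{|C||D|}\,\mathfrak{Jac}\Big(C,D,\bm{w};\ \sum_{b_1,b_2\in\mathfrak{R}}\chi(a_1 b_1+a_2b_2)\,x_{(b_1,b_2,a_3)} : a\in\mathfrak{R}^3\Big)$, where on the right-hand sides each variable $x_{(a_1,a_2,a_3)}$ of $\mathfrak{Jac}(C,D,\bm{w};x_a:a\in\mathfrak{R}^3)$ is replaced by the indicated linear form.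
   Context: An $\mathbb{F}_q$-linear code of length $n$ is a subspace of $\mathbb{F}_q^n$; a $\mathbb{Z}_k$-linear code of length $n$ is an additive subgroup of $\mathbb{Z}_k^n$. For $\bm{u},\bm{v}\in\mathfrak{R}^n$, $\bm{u}\cdot\bm{v}=\sum_i u_iv_i$, and $C^\perp=\{\bm{v}\in\mathfrak{R}^n : \bm{u}\cdot\bm{v}=0 \ \forall \bm{u}\in C\}$. The character $\chi$: if $\mathfrak{R}=\mathbb{F}_q$, $q=p^f$, fix a root $\lambda$ of a primitive irreducible polynomial of degree $f$ over $\mathbb{F}_p$, write $\alpha=\alpha_0+\alpha_1\lambda+\cdots+\alpha_{f-1}\lambda^{f-1}$ ($\alpha_i\in\mathbb{F}_p$) and set $\chi(\alpha)=\zeta_p^{\alpha_0}$, $\zeta_p$ a primitive $p$-th root of unity; if $\mathfrak{R}=\mathbb{Z}_k$, $\chi(\alpha)=\zeta_k^{\alpha}$, $\zeta_k$ a primitive $k$-th root of unity. For $a\in\mathfrak{R}^3$, $h_a(\bm{u},\bm{v};\bm{w})=\#\{i:(u_i,v_i,w_i)=a\}$, and the complete joint Jacobi polynomial is $\mathfrak{Jac}(C,D,\bm{w};x_a : a\in\mathfrak{R}^3)=\sum_{\bm{u}\in C,\bm{v}\in D}\prod_{a\in\mathfrak{R}^3}x_a^{h_a(\bm{u},\bm{v};\bm{w})}$. *)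

(* Defs.v *)
From HB Require Import structures.
From mathcomp Require Import all_boot all_order all_algebra all_field.
From mathcomp Require Import mpoly.

Set Implicit Arguments.
Unset Strict Implicit.
Unset Printing Implicit Defensive.

Import GRing.Theory Num.Theory.
Local Open Scope ring_scope.

Section Codes.
Variable R : finComNzRingType.

Definition dotp n (u v : 'rV[R]_n) : R := \sum_(i < n) u 0 i * v 0 i.

Definition linear_code n (C : {set 'rV[R]_n}) : Prop :=
  [/\ 0 \in C,
      (forall u v, u \in C -> v \in C -> u + v \in C) &
      (forall (a : R) u, u \in C -> a *: u \in C)].

Definition dual_code n (C : {set 'rV[R]_n}) : {set 'rV[R]_n} :=
  [set v | [forall u in C, dotp u v == 0]].

Definition hcount n (u v w : 'rV[R]_n) (a : R * R * R) : nat :=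
  #|[set i : 'I_n | (u 0 i, v 0 i, w 0 i) == a]|.

Definition nv : nat := #|{: R * R * R}|.

Definition xvar (a : R * R * R) : {mpoly algC[nv]} := 'X_(enum_rank a).

(* Complete joint Jacobi polynomial, with each variable x_a replaced by y a:
   Jac(C, D, w; y_a : a in R^3) = sum_{u in C, v in D} prod_a (y a)^(h_a(u,v;w)).
   With y = xvar this is the polynomial Jac(C, D, w; x_a : a in R^3) itself. *)
Definition jac n (C D : {set 'rV[R]_n}) (w : 'rV[R]_n)
  (y : R * R * R -> {mpoly algC[nv]}) : {mpoly algC[nv]} :=
  \sum_(u in C) \sum_(v in D) \prod_(a : R * R * R) y a ^+ hcount u v w a.

Definition form1 (chi : R -> algC) (a : R * R * R) : {mpoly algC[nv]} :=
  \sum_(b : R) chi (a.1.1 * b) *: xvar (b, a.1.2, a.2).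

Definition form2 (chi : R -> algC) (a : R * R * R) : {mpoly algC[nv]} :=
  \sum_(b1 : R) \sum_(b2 : R) chi (a.1.1 * b1 + a.1.2 * b2) *: xvar (b1, b2, a.2).

Definition jacobi_macwilliams (chi : R -> algC) : Prop :=
  forall (n : nat) (C D : {set 'rV[R]_n}) (w : 'rV[R]_n),
    linear_code C -> linear_code D ->
    jac (dual_code C) D w xvar = (#|C|%:R)^-1 *: jac C D w (form1 chi)
    /\
    jac (dual_code C) (dual_code D) w xvar
      = ((#|C| * #|D|)%N%:R)^-1 *: jac C D w (form2 chi).

End Codes.

(* Writing
   alpha = sum_{i<f} c_i lam^i with c_i in F_p (= {0,..,p-1}), chi(alpha) = zeta^(c_0). *)

Definition Fp_to (p : nat) (F : finFieldType) (c : 'F_p) : F := (val c)%:R.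

Definition prim_poly_Fp (p f : nat) (P : {poly 'F_p}) : Prop :=
  [/\ irreducible_poly P, size P = f.+1,
      P %| 'X^(p ^ f - 1) - 1 &
      forall e : nat, (0 < e < p ^ f - 1)%N -> ~~ (P %| 'X^e - 1)].

Definition Fq_char (F : finFieldType) (p f : nat) (lam : F) (zeta : algC)
  (alpha : F) : algC :=
  match [pick c : f.-tuple 'I_p |
           alpha == \sum_(i < f) (nat_of_ord (tnth c i))%:R * lam ^+ i] with
  | Some c => zeta ^+ (nth 0%N (map (@nat_of_ord p) c) 0)
  | None => 1
  end.

Definition Zk_char (k : nat) (zeta : algC) (alpha : 'Z_k) : algC :=
  zeta ^+ (val alpha).

(* Main.v *)
Require Import Defs.
From HB Require Import structures.
From mathcomp Require Import all_boot all_order all_algebra all_field.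
From mathcomp Require Import mpoly.
Import GRing.Theory Num.Theory.
Local Open Scope ring_scope.

Section Gen.
Variable R : finComNzRingType.
Variable chi : R -> algC.
Hypothesis chi0 : chi 0 = 1.
Hypothesis chiD : forall x y, chi (x + y) = chi x * chi y.
Hypothesis chiG : forall a, a != 0 -> exists s, chi (a * s) != 1.

Lemma jacE n (C D : {set 'rV[R]_n}) w y :
  jac C D w y = \sum_(u in C) \sum_(v in D) \prod_(i < n) y (u 0 i, v 0 i, w 0 i).
Proof.
rewrite /jac; apply: eq_bigr => u _; apply: eq_bigr => v _.
rewrite (partition_big (fun i => (u 0 i, v 0 i, w 0 i)) predT) //=.
apply: eq_bigr => a _.
rewrite /hcount -prodr_const; symmetry; apply: eq_big => [i|i /eqP -> //]; by rewrite inE.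
Qed.

Lemma jac_swap n (C D : {set 'rV[R]_n}) w y :
  jac C D w y = jac D C w (fun a => y (a.1.2, a.1.1, a.2)).
Proof. by rewrite !jacE exchange_big. Qed.

Lemma dotpD n (u t b : 'rV[R]_n) : dotp (u + t) b = dotp u b + dotp t b.
Proof. by rewrite /dotp -big_split; apply: eq_bigr => i _; rewrite mxE mulrDl. Qed.

Lemma dotpZ n s (u b : 'rV[R]_n) : dotp (s *: u) b = s * dotp u b.
Proof. by rewrite /dotp mulr_sumr; apply: eq_bigr => i _; rewrite mxE mulrA. Qed.

Lemma chi_sum n (C : {set 'rV[R]_n}) b : linear_code C ->
  \sum_(u in C) chi (dotp u b) = if b \in dual_code C then #|C|%:R else 0.
Proof.
case=> C0 CD CZ.
case: ifP => [/[!inE]/forallP Hb | Hb].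
  rewrite -sumr_const; apply: eq_bigr => u uC.
  by move/implyP: (Hb u) => /(_ uC)/eqP ->.
have [u0 u0C nz] : exists2 u0, u0 \in C & dotp u0 b != 0.
  apply/exists_inP; apply: contraFT Hb => /exists_inPn H.
  by rewrite inE; apply/forall_inP => u uC; move: (H u uC); rewrite negbK.
have [s Hs] := chiG _ nz.
set t := s *: u0.
have tC : t \in C by exact: CZ.
set S := \sum_(u in C) _.
have HS : S = chi (dotp t b) * S.
  rewrite {1}/S (reindex_inj (addIr t)) /=.
  rewrite (eq_bigl (fun u => u \in C)); last first.
    move=> u /=; apply/idP/idP => [H|]; last by move=> H; exact: CD.
    by rewrite -(addrK t u); apply: CD => //; rewrite -scaleN1r; exact: CZ.
  by rewrite /S mulr_sumr; apply: eq_bigr => u _; rewrite dotpD chiD mulrC.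
have : S * (1 - chi (dotp t b)) = 0 by rewrite mulrBr mulr1 {1}HS mulrC subrr.
move/eqP; rewrite mulf_eq0 subr_eq0 /t dotpZ mulrC => /orP [/eqP //|].
by rewrite eq_sym (negbTE Hs).
Qed.

Lemma mac1 n (C D : {set 'rV[R]_n}) w (y : R * R * R -> {mpoly algC[nv R]}) :
  linear_code C ->
  jac (dual_code C) D w y =
  (#|C|%:R)^-1 *: jac C D w (fun a => \sum_(b : R) chi (a.1.1 * b) *: y (b, a.1.2, a.2)).
Proof.
move=> LC.
have hb : bijective (fun f : {ffun 'I_n -> R} => \row_i f i).
  exists (fun v : 'rV[R]_n => [ffun i => v 0 i]).
    by move=> f; apply/ffunP => i; rewrite ffunE mxE.
  by move=> v; apply/rowP => i; rewrite mxE ffunE.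
have -> : jac C D w (fun a => \sum_(b : R) chi (a.1.1 * b) *: y (b, a.1.2, a.2)) =
  \sum_(v in D) \sum_(f : {ffun 'I_n -> R})
    (\sum_(u in C) chi (dotp u (\row_i f i))) *: \prod_(i < n) y (f i, v 0 i, w 0 i).
  rewrite jacE exchange_big; apply: eq_bigr => v _.
  under eq_bigr => u _.
    rewrite bigA_distr_bigA /=.
    under eq_bigr => f _ do rewrite scaler_prod.
    over.
  rewrite exchange_big; apply: eq_bigr => f _; rewrite scaler_suml.
  apply: eq_bigr => u _; congr (_ *: _).
  rewrite /dotp (big_morph chi chiD chi0); apply: eq_bigr => i _; by rewrite mxE.
have CC : #|C|%:R != 0 :> algC.
  by rewrite pnatr_eq0 -lt0n; apply/card_gt0P; exists 0; case: LC.
rewrite jacE exchange_big scaler_sumr; apply: eq_bigr => v _.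
rewrite (reindex _ (onW_bij _ hb)) scaler_sumr /=.
rewrite [RHS](bigID (fun f : {ffun 'I_n -> R} => \row_i f i \in dual_code C)) /=.
rewrite [X in _ = _ + X]big1 ?addr0; last first.
  by move=> f Hf; rewrite chi_sum // (negbTE Hf) scale0r scaler0.
apply: eq_bigr => f Hf; rewrite chi_sum // Hf scalerA mulVf // scale1r.
by apply: eq_bigr => i _; rewrite mxE.
Qed.

Lemma eq_jac n (C D : {set 'rV[R]_n}) w y y' : (forall a, y a = y' a) ->
  jac C D w y = jac C D w y'.
Proof.
by move=> H; apply: eq_bigr => u _; apply: eq_bigr => v _; apply: eq_bigr => a _; rewrite H.
Qed.

Lemma gen_jm : jacobi_macwilliams chi.
Proof.
move=> n C D w LC LD; split; first exact: mac1.
rewrite mac1 // jac_swap mac1 // jac_swap scalerA -invfM natrM mulrC.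
congr (_ *: _); apply: eq_jac => a /=.
rewrite /form1 /form2 /= exchange_big; apply: eq_bigr => b1 _.
rewrite scaler_sumr; apply: eq_bigr => b2 _.
by rewrite scalerA chiD mulrC.
Qed.

End Gen.
Section FpM.
Variables (p : nat) (F : finFieldType).
Hypotheses (pr : prime p) (pF : p \in [pchar F]).
Definition fpto := @Fp_to p F.
Lemma fpto_nat n : fpto (n%:R : 'F_p) = n%:R.
Proof.
rewrite /fpto /Fp_to; have -> : val (n%:R : 'F_p) = (n %% p)%N by exact: val_Fp_nat.
exact: GRing.natr_mod_pchar.
Qed.
Lemma fpK (c : 'F_p) : ((val c)%:R : 'F_p) = c.
Proof. exact: natr_Zp. Qed.
Lemma fpto_nmod : nmod_morphism fpto.
Proof.
split; first by rewrite /fpto /Fp_to.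
move=> a b; by rewrite -[a]fpK -[b]fpK -natrD !fpto_nat natrD.
Qed.
Lemma fpto_mon : monoid_morphism fpto.
Proof.
split; first by rewrite -[X in fpto X]mulr1n fpto_nat.
move=> a b; by rewrite -[a]fpK -[b]fpK -natrM !fpto_nat natrM.
Qed.
HB.instance Definition fpto_i1 := GRing.isNmodMorphism.Build _ _ fpto fpto_nmod.
HB.instance Definition fpto_i2 := GRing.isMonoidMorphism.Build _ _ fpto fpto_mon.

Variables (f : nat) (lam : F) (P : {poly 'F_p}) (zeta : algC).
Hypotheses (irrP : irreducible_poly P) (szP : size P = f.+1)
  (rootP : root (map_poly fpto P) lam) (cardF : #|F| = (p ^ f)%N)
  (pz : p.-primitive_root zeta).

Definition rep (c : f.-tuple 'I_p) : F :=
  \sum_(i < f) (nat_of_ord (tnth c i))%:R * lam ^+ i.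

Lemma no_small_root (Q : {poly 'F_p}) : Q != 0 -> (size Q <= f)%N ->
  (map_poly fpto Q).[lam] != 0.
Proof.
move=> Q0 sQ.
have : coprimep P Q.
  rewrite irreducible_poly_coprime //; apply/negP => /(dvdp_leq Q0).
  by rewrite szP ltnNge sQ.
case/Bezout_coprimepP => [[u v]] /= /eqp_size; rewrite size_poly1 => s1.
have := size1_polyC (eq_leq s1); set c := _`_0 => Hc.
have c0 : c != 0.
  apply/eqP => c0; move: s1; by rewrite Hc c0 size_poly0.
apply/negP => /eqP Hq.
have := congr1 (fun q => (map_poly fpto q).[lam]) Hc => /=.
rewrite rmorphD !rmorphM /= hornerD !hornerM Hq (eqP rootP) !mulr0 addr0.
by rewrite map_polyC hornerC => /esym/eqP; rewrite fmorph_eq0; exact/negP.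
Qed.


Lemma rep_inj : injective rep.
Proof.
move=> c d H; apply/eqP; apply: contraT => cd.
pose x0 : 'I_p := Ordinal (prime_gt0 pr).
set Q := \poly_(i < f) ((nat_of_ord (nth x0 c i))%:R - (nat_of_ord (nth x0 d i))%:R : 'F_p).
have Q0 : Q != 0.
  have [i Hi] : exists i : 'I_f, tnth c i != tnth d i.
    apply/existsP; apply: contraR cd => /existsPn H0.
    by apply/eqP/eq_from_tnth => i; move/negbNE/eqP: (H0 i).
  apply/eqP => /(congr1 (fun q : {poly 'F_p} => q`_i)).
  rewrite coef_poly ltn_ord coef0 -!tnth_nth => /eqP; rewrite subr_eq0 => /eqP /(congr1 val).
  rewrite /= !val_Fp_nat // !modn_small // => /val_inj; exact/eqP.
have := no_small_root _ Q0 (size_poly _ _).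
rewrite /Q poly_def rmorph_sum horner_sum.
under eq_bigr => i _ do rewrite /= -!tnth_nth map_polyZ map_polyXn hornerZ hornerXn rmorphB /= !fpto_nat.
by rewrite (eq_bigr (fun i : 'I_f => (nat_of_ord (tnth c i))%:R * lam ^+ i - (nat_of_ord (tnth d i))%:R * lam ^+ i)) ?sumrB -/(rep c) -/(rep d) ?H ?subrr ?eqxx // => i _; rewrite mulrBl.
Qed.

Lemma rep_bij : bijective rep.
Proof. apply: (inj_card_bij rep_inj). by rewrite card_tuple card_ord cardF. Qed.


Let chi := Fq_char p f lam zeta.
Definition hd (c : f.-tuple 'I_p) := nth 0%N (map (@nat_of_ord p) c) 0.

Lemma char_rep c : chi (rep c) = zeta ^+ hd c.
Proof.
rewrite /chi /Fq_char; case: pickP => [c' /eqP H | H]; first by rewrite (rep_inj _ _ H).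
by move: (H c); rewrite eqxx.
Qed.

Lemma rep_surj x : exists c, rep c = x.
Proof. by case: rep_bij => g _ K; exists (g x); exact: K. Qed.

Lemma f_gt0 : (0 < f)%N.
Proof.
have : (1 < #|F|)%N by apply/card_gt1P; exists 0, 1; rewrite !inE eq_sym oner_eq0.
by rewrite cardF; case: (f) => //; rewrite expn0.
Qed.

Lemma hdE c : hd c = tnth c (Ordinal f_gt0).
Proof.
by rewrite /hd (tnth_nth (tnth c (Ordinal f_gt0))) (nth_map (tnth c (Ordinal f_gt0))) ?size_tuple ?f_gt0.
Qed.

Lemma chi_add x y : chi (x + y) = chi x * chi y.
Proof.
case: (rep_surj x) => cx <-; case: (rep_surj y) => cy <-.
pose cz := [tuple Ordinal (ltn_pmod (tnth cx i + tnth cy i) (prime_gt0 pr)) | i < f].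
have -> : rep cx + rep cy = rep cz.
  rewrite /rep -big_split; apply: eq_bigr => i _.
  by rewrite tnth_mktuple /= GRing.natr_mod_pchar // natrD mulrDl.
by rewrite !char_rep !hdE tnth_mktuple /= (prim_expr_mod pz) exprD.
Qed.

Lemma chi_nz x : chi x != 0.
Proof.
case: (rep_surj x) => c <-; rewrite char_rep expf_neq0 //.
apply/eqP => z0; have := prim_expr_order pz; rewrite z0 expr0n gtn_eqF ?prime_gt0 //.
by move/eqP; rewrite eq_sym oner_eq0.
Qed.

Lemma chi_0 : chi 0 = 1.
Proof.
have h := chi_add 0 0; rewrite addr0 in h.
by apply/(mulfI (chi_nz 0)); rewrite mulr1 -h.
Qed.

Lemma chi_gen a : a != 0 -> exists s, chi (a * s) != 1.
Proof.
move=> a0; exists a^-1; rewrite mulfV //.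
pose e := [tuple (if i == Ordinal f_gt0 then Ordinal (prime_gt1 pr) else Ordinal (prime_gt0 pr)) | i < f].
have <- : rep e = 1.
  rewrite /rep (bigD1 (Ordinal f_gt0)) //= big1 ?addr0.
    by rewrite tnth_mktuple eqxx /= expr0 mulr1.
  by move=> i ne; rewrite tnth_mktuple (negbTE ne) /= mul0r.
rewrite char_rep hdE tnth_mktuple eqxx /= expr1.
rewrite -[X in X != _]expr1 -(prim_order_dvd pz) dvdn1.
by apply/eqP => p1; move: (prime_gt1 pr); rewrite p1.
Qed.

Lemma fq_jm : jacobi_macwilliams chi.
Proof. exact: gen_jm chi_0 chi_add chi_gen. Qed.

End FpM.
Lemma zk k zeta : (1 < k)%N -> k.-primitive_root zeta -> jacobi_macwilliams (@Zk_char k zeta).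
Proof.
move=> k1 pz; apply: gen_jm.
- by rewrite /Zk_char expr0.
- have pz2 : (Zp_trunc k).+2.-primitive_root zeta by rewrite Zp_cast.
  by move=> x y; rewrite /Zk_char -exprD /= (prim_expr_mod pz2).
- move=> a a0; exists 1; rewrite mulr1 /Zk_char -(prim_order_dvd pz).
  have : (0 < val a < k)%N.
    have -> : (val a < k)%N by rewrite -[X in (_ < X)%N](Zp_cast k1) ltn_ord.
    rewrite andbT lt0n.
    by apply: contra a0 => /eqP h; apply/eqP/val_inj.
  case/andP => h1 h2; apply/negP => /(dvdn_leq h1); by rewrite leqNgt h2.
Qed.

Theorem corollary3p4 :
  (* Case R = F_q, q = p^f *)
  (forall (F : finFieldType) (p f : nat) (lam : F) (zeta : algC),
     prime p -> p \in [pchar F] -> #|F| = (p ^ f)%N ->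
     (exists P : {poly 'F_p},
        @prim_poly_Fp p f P /\ root (map_poly (@Fp_to p F) P) lam) ->
     p.-primitive_root zeta ->
     jacobi_macwilliams (Fq_char p f lam zeta))
  /\
  (* Case R = Z_k, k >= 2 *)
  (forall (k : nat) (zeta : algC),
     (1 < k)%N -> k.-primitive_root zeta ->
     jacobi_macwilliams (@Zk_char k zeta)).
Proof.
split; last exact: zk.
move=> F p f lam zeta pr pF cardF [P [[irrP szP _ _] rootP]] pz.
exact: (@fq_jm p F pr pF f lam P zeta irrP szP rootP cardF pz).
Qed.
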